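(* Let $(X,d)$ be a complete metric space and let $T:X\to X$ be a mapping for which there exists $\gamma\in[0,\tfrac12)$ such that $$d(Tx,T^2x)+d(T^2x,Ty)+d(Ty,Tx)\le \gamma\,[\,d(x,Ty)+d(y,Tx)+d(x,T^2x)+d(y,T^2x)+d(Tx,Ty)\,]$$ for all $x,y\in X$ with $x\neq y$ and $y\neq Tx$ (i.e. $T$ is a generalized orbital triangular Chatterjea contraction). Suppose that $T$ has no periodic points of prime period $2$. Then $T$ has a unique fixed point.
   Context: A point $x\in X$ is a periodic point of period $n$ of $T$ if $T^n x=x$; the least positive integer $n$ with $T^nx=x$ is its prime period. Thus ''no periodic points of prime period $2$'' means there is no $x\in X$ with $T^2x=x$ and $Tx\neq x$. The condition ''$x\neq y\neq Tx$'' in the paper means $x\neq y$ and $y\neq Tx$. *)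

(* Defs.v *)
From Stdlib Require Import Reals.
Open Scope R_scope.

Definition is_metric {X : Type} (d : X -> X -> R) : Prop :=
  (forall x y, 0 <= d x y) /\
  (forall x y, d x y = 0 <-> x = y) /\
  (forall x y, d x y = d y x) /\
  (forall x y z, d x z <= d x y + d y z).

Definition cauchy_seq {X : Type} (d : X -> X -> R) (u : nat -> X) : Prop :=
  forall eps, 0 < eps -> exists N, forall m n, (N <= m)%nat -> (N <= n)%nat -> d (u m) (u n) < eps.

Definition converges_to {X : Type} (d : X -> X -> R) (u : nat -> X) (l : X) : Prop :=
  forall eps, 0 < eps -> exists N, forall n, (N <= n)%nat -> d (u n) l < eps.

Definition complete_metric {X : Type} (d : X -> X -> R) : Prop :=
  is_metric d /\ forall u, cauchy_seq d u -> exists l, converges_to d u l.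

Definition gotc {X : Type} (d : X -> X -> R) (T : X -> X) : Prop :=
  exists gamma, 0 <= gamma < 1/2 /\
    forall x y, x <> y -> y <> T x ->
      d (T x) (T (T x)) + d (T (T x)) (T y) + d (T y) (T x)
      <= gamma * (d x (T y) + d y (T x) + d x (T (T x)) + d y (T (T x)) + d (T x) (T y)).

Definition no_prime_period_2 {X : Type} (T : X -> X) : Prop :=
  ~ exists x, T (T x) = x /\ T x <> x.

(* Main.v *)
Require Import Defs.
From Stdlib Require Import Reals.
From Stdlib Require Import Lra Lia Classical.
Open Scope R_scope.

Theorem theorem5p1 (X : Type) (x0 : X) (d : X -> X -> R) (T : X -> X)
  (Hcomp : complete_metric d) (HT : gotc d T) (H2 : no_prime_period_2 T) :
  exists! x, T x = x.
Proof.
  destruct Hcomp as [[Hpos [Hzero [Hsym Htri]]] Hcpl].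
  destruct HT as [g [[g0 g1] Hc]].
  assert (Hdd : forall u, d u u = 0) by (intro u; apply Hzero; reflexivity).
  assert (Huniq : forall u v, T u = u -> T v = v -> u = v).
  { intros u v Hu Hv. destruct (classic (u = v)) as [e|Hne]; auto.
    assert (Hne2 : v <> T u) by (rewrite Hu; auto).
    pose proof (Hc u v Hne Hne2) as H. rewrite Hu, Hu, Hv in H.
    rewrite Hdd, (Hsym v u) in H.
    assert (d u v <> 0) by (intro H'; apply Hne; apply Hzero; auto).
    pose proof (Hpos u v). exfalso. nra. }
  assert (Hex : exists z, T z = z).
  2:{ destruct Hex as [z Hz]. exists z. split; auto. }
  pose (x := fun n => Nat.iter n T x0).
  assert (Hx : forall n, T (x n) = x (S n)) by reflexivity.
  destruct (classic (exists n, x (S n) = x n)) as [[n Hn]|Hne].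
  { exists (x n). rewrite Hx; auto. }
  assert (Hne1 : forall n, x (S n) <> x n) by (intros n H; apply Hne; eauto).
  clear Hne.
  assert (Hne2 : forall n, x (S (S n)) <> x n).
  { intros n H. apply H2. exists (x n). rewrite Hx, Hx. split; auto. }
  pose (a := fun n => d (x n) (x (S n))).
  pose (s := fun n => a n + a (S n) + d (x n) (x (S (S n)))).
  assert (Hapos : forall n, 0 < a n).
  { intro n. unfold a. destruct (Rle_lt_or_eq_dec 0 _ (Hpos (x n) (x (S n)))) as [h|h]; auto.
    exfalso. apply (Hne1 n). symmetry. apply Hzero. auto. }
  assert (Hspos : forall n, 0 < s n).
  { intro n. unfold s. pose proof (Hapos n). pose proof (Hapos (S n)).
    pose proof (Hpos (x n) (x (S (S n)))). lra. }
  assert (Has : forall n, a n <= s n).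
  { intro n. unfold s. pose proof (Hapos (S n)). pose proof (Hpos (x n) (x (S (S n)))). lra. }
  assert (Hkey : forall n, (1 - g) * s (S n) <= g * s n).
  { intro n.
    assert (h1 : x (S n) <> x n) by apply Hne1.
    assert (h2 : x n <> T (x (S n))) by (rewrite Hx; intro h; apply (Hne2 n); auto).
    pose proof (Hc _ _ h1 h2) as H. rewrite !Hx in H. rewrite Hdd in H.
    pose proof (Htri (x n) (x (S n)) (x (S (S (S n))))) as t1.
    pose proof (Htri (x (S n)) (x (S (S n))) (x (S (S (S n))))) as t2.
    rewrite (Hsym (x (S (S (S n)))) (x (S n))) in H.
    rewrite (Hsym (x (S (S n))) (x (S n))) in H.
    unfold s, a.
    set (D13 := d (x (S n)) (x (S (S (S n))))) in *.
    assert (g * (d (x n) (x (S (S n))) + D13 + d (x n) (x (S (S (S n)))) + d (x (S n)) (x (S (S n))))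
      <= g * (d (x n) (x (S (S n))) + d (x n) (x (S n)) + d (x (S n)) (x (S (S n))) + D13 + D13)).
    { apply Rmult_le_compat_l; lra. }
    assert (g * D13 <= g * (d (x (S n)) (x (S (S n))) + d (x (S (S n))) (x (S (S (S n)))))).
    { apply Rmult_le_compat_l; lra. }
    lra. }
  pose (q := g / (1 - g)).
  assert (Hq0 : 0 <= q) by (unfold q; apply Rmult_le_pos; [lra| left; apply Rinv_0_lt_compat; lra]).
  assert (Hq1 : q < 1).
  { unfold q. apply (Rmult_lt_reg_r (1 - g)); [lra|].
    field_simplify; lra. }
  assert (Hs1 : forall n, s (S n) <= q * s n).
  { intro n. apply (Rmult_le_reg_l (1 - g)); [lra|].
    replace ((1 - g) * (q * s n)) with (g * s n) by (unfold q; field; lra).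
    apply Hkey. }
  assert (Hsn : forall n, s n <= q ^ n * s O).
  { induction n; simpl; [lra|]. pose proof (Hs1 n).
    assert (q * s n <= q * (q ^ n * s O)) by (apply Rmult_le_compat_l; lra). lra. }
  assert (Hdec : forall n k, s (n + S k)%nat < s n).
  { intros n k. induction k.
    - rewrite Nat.add_1_r. pose proof (Hs1 n). pose proof (Hspos n). nra.
    - rewrite Nat.add_succ_r. pose proof (Hs1 (n + S k)%nat). pose proof (Hspos (n + S k)%nat). nra. }
  assert (Hinj : forall n m, (n < m)%nat -> x n <> x m).
  { intros n m Hlt He.
    assert (e1 : x (S n) = x (S m)) by (rewrite <- (Hx n), <- (Hx m), He; auto).
    assert (e2 : x (S (S n)) = x (S (S m))) by (rewrite <- (Hx (S n)), <- (Hx (S m)), e1; auto).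
    assert (s n = s m) by (unfold s, a; rewrite He, e1, e2; auto).
    replace m with (n + S (m - S n))%nat in H by lia.
    pose proof (Hdec n (m - S n)%nat). lra. }
  pose (K := s O / (1 - q)).
  assert (HK : 0 <= K) by (unfold K; apply Rmult_le_pos; [left; apply Hspos | left; apply Rinv_0_lt_compat; lra]).
  assert (Hdist : forall n k, d (x n) (x (n + k)%nat) <= K * q ^ n * (1 - q ^ k)).
  { intros n k. induction k.
    - rewrite Nat.add_0_r, Hdd. simpl. lra.
    - rewrite Nat.add_succ_r. pose proof (Htri (x n) (x (n + k)%nat) (x (S (n + k)))).
      pose proof (Has (n + k)%nat). pose proof (Hsn (n + k)%nat). unfold a in *.
      assert (K * q ^ n * (1 - q ^ k) + q ^ (n + k) * s O = K * q ^ n * (1 - q ^ S k)).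
      { unfold K. rewrite pow_add. simpl. field. lra. }
      lra. }
  assert (Hdist2 : forall n k, d (x n) (x (n + k)%nat) <= K * q ^ n).
  { intros n k. pose proof (Hdist n k). pose proof (pow_le q k Hq0). pose proof (pow_le q n Hq0).
    assert (K * q ^ n * q ^ k >= 0). { apply Rle_ge. apply Rmult_le_pos; [apply Rmult_le_pos|]; auto. }
    nra. }
  assert (Hcau : cauchy_seq d x).
  { intros eps Heps.
    assert (Habs : Rabs q < 1) by (rewrite Rabs_right; lra).
    assert (Hep : 0 < eps / (K + 1)) by (apply Rdiv_lt_0_compat; lra).
    destruct (pow_lt_1_zero q Habs _ Hep) as [N HN].
    exists N. intros m n Hm Hn.
    assert (Hb : forall n k, (N <= n)%nat -> d (x n) (x (n + k)%nat) < eps).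
    { intros n' k Hn'. pose proof (Hdist2 n' k). pose proof (HN n' Hn').
      rewrite Rabs_right in H0 by (apply Rle_ge, pow_le; auto).
      assert (K * q ^ n' <= K * (eps / (K + 1))) by (apply Rmult_le_compat_l; lra).
      assert (K * (eps / (K + 1)) < eps).
      { apply (Rmult_lt_reg_r (K + 1)); [lra|]. unfold Rdiv.
        rewrite Rmult_assoc, Rmult_assoc, Rinv_l by lra. nra. }
      lra. }
    destruct (Nat.le_ge_cases m n).
    - replace n with (m + (n - m))%nat by lia. apply Hb; auto.
    - replace m with (n + (m - n))%nat by lia. rewrite Hsym. apply Hb; auto. }
  destruct (Hcpl x Hcau) as [z Hz].
  exists z.
  destruct (classic (T z = z)) as [e|Hnz]; auto. exfalso.
  set (D := d z (T z)).
  assert (HD : 0 < D).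
  { destruct (Rle_lt_or_eq_dec 0 _ (Hpos z (T z))) as [h|h]; auto.
    exfalso. apply Hnz. symmetry. apply Hzero. auto. }
  destruct (Hz (D * (1 - g) / 3)) as [N HN].
  { apply Rdiv_lt_0_compat; [apply Rmult_lt_0_compat|]; lra. }
  assert (Hgood : forall n, (N <= n)%nat -> x n <> z -> x (S n) <> z -> False).
  { intros n Hn h1 h2.
    assert (h2' : z <> T (x n)) by (rewrite Hx; auto).
    pose proof (Hc _ _ h1 h2') as H. rewrite !Hx in H.
    pose proof (HN n Hn). pose proof (HN (S n) ltac:(lia)). pose proof (HN (S (S n)) ltac:(lia)).
    pose proof (Htri z (x (S (S n))) (T z)). pose proof (Htri z (x (S n)) (T z)).
    pose proof (Htri (x n) z (T z)). pose proof (Htri (x (S n)) z (T z)).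
    pose proof (Htri (x n) z (x (S (S n)))).
    pose proof (Hpos (x (S n)) (x (S (S n)))).
    rewrite (Hsym z (x (S n))), (Hsym z (x (S (S n)))) in *.
    rewrite (Hsym (T z) (x (S n))) in H.
    unfold D in *.
    set (e0 := d (x n) z) in *. set (e1 := d (x (S n)) z) in *. set (e2 := d (x (S (S n))) z) in *.
    assert (g * (d (x n) (T z) + e1 + d (x n) (x (S (S n))) + e2 + d (x (S n)) (T z))
       <= g * (2 * d z (T z) + 2 * e0 + 2 * e1 + 2 * e2)) by (apply Rmult_le_compat_l; lra).
    assert (g * (e0 + e1 + e2) <= g * (d z (T z) * (1 - g))) by (apply Rmult_le_compat_l; lra).
    assert (g * (d z (T z) * (1 - g)) <= / 2 * (d z (T z) * (1 - g))).
    { apply Rmult_le_compat_r; [apply Rmult_le_pos|]; lra. }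
    assert (0 < d z (T z) * (1 - g)) by (apply Rmult_lt_0_compat; lra).
    lra. }
  destruct (classic (x N = z)) as [e0|n0].
  - apply (Hgood (S N)); [lia| |].
    + intro h. apply (Hinj N (S N)); [lia|]. congruence.
    + intro h. apply (Hinj N (S (S N))); [lia|]. congruence.
  - destruct (classic (x (S N) = z)) as [e1|n1].
    + apply (Hgood (S (S N))); [lia| |].
      * intro h. apply (Hinj (S N) (S (S N))); [lia|]. congruence.
      * intro h. apply (Hinj (S N) (S (S (S N)))); [lia|]. congruence.
    + apply (Hgood N); auto.
Qed.
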